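(* Let $G$ be a finite group. The following are equivalent: (1) $G$ is nested; (2) there is a chain of normal subgroups $G=X_0>X_1>\dots>X_n\ge 1$ such that for every normal subgroup $N$ of $G$ we have $Z(G/N)=X_i/N$ for some $i\in\{0,\dots,n\}$; (3) for all normal subgroups $N,M$ of $G$, defining $Z_N$ and $Z_M$ by $Z_N/N=Z(G/N)$ and $Z_M/M=Z(G/M)$, either $Z_N\le Z_M$ or $Z_M\le Z_N$. Moreover, if in (2) for every $i\in\{0,\dots,n\}$ there exists a normal subgroup $N$ with $Z(G/N)=X_i/N$, then $G=X_0>X_1>\dots>X_n$ is exactly the chain of centers of $G$.
   Context: All groups are finite; $\mathrm{Irr}(G)$ is the set of complex irreducible characters of $G$. For $\chi\in\mathrm{Irr}(G)$, $Z(\chi)=\{g\in G: |\chi(g)|=\chi(1)\}$ is the center of $\chi$ (a normal subgroup with $Z(\chi)/\ker\chi=Z(G/\ker\chi)$). A group $G$ is nested if for all $\chi,\psi\in\mathrm{Irr}(G)$ either $Z(\chi)\le Z(\psi)$ or $Z(\psi)\le Z(\chi)$. If $G$ is nested, the distinct subgroups in $\{Z(\chi):\chi\in\mathrm{Irr}(G)\}$ form a chain $G=X_0>X_1>\dots>X_n\ge1$, called the chain of centers of $G$. *)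

(* Defs.v *)
From mathcomp Require Import all_boot all_order all_algebra all_fingroup all_solvable all_field all_character.
Set Implicit Arguments. Unset Strict Implicit. Unset Printing Implicit Defensive.
Import GRing.Theory Num.Theory.
Local Open Scope group_scope.

Definition ZN (gT : finGroupType) (G N : {group gT}) : {set gT} :=
  coset N @*^-1 'Z(G / N).

Definition nested (gT : finGroupType) (G : {group gT}) : Prop :=
  forall i j : Iirr G,
    ('Z(('chi_i)%R)%CF \subset 'Z(('chi_j)%R)%CF) \/ ('Z(('chi_j)%R)%CF \subset 'Z(('chi_i)%R)%CF).

Definition normal_chain (gT : finGroupType) (G : {group gT}) (n : nat)
    (X : nat -> {group gT}) : Prop :=
  [/\ X 0%N = G,
      (forall i, (i < n)%N -> X i.+1 \proper X i) &
      (forall i, (i <= n)%N -> X i <| G)].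

Definition centers_in_chain (gT : finGroupType) (G : {group gT}) (n : nat)
    (X : nat -> {group gT}) : Prop :=
  forall N : {group gT}, N <| G -> exists2 i, (i <= n)%N & ZN G N = X i.

(* Main.v *)
Require Import Defs.
From mathcomp Require Import all_boot all_order all_algebra all_fingroup all_solvable all_field all_character.
Set Implicit Arguments. Unset Strict Implicit. Unset Printing Implicit Defensive.
Local Open Scope group_scope.

Section L.
Variables (gT : finGroupType) (G : {group gT}).

Lemma ZN_subG (N : {group gT}) : N <| G -> ZN G N \subset G.
Proof.
move=> nsNG; rewrite /ZN -{2}(quotientGK nsNG); apply: morphpreS; exact: center_sub.
Qed.

Lemma ZN_sub (N : {group gT}) (A : {set gT}) : N <| G -> A \subset G ->
  (A \subset ZN G N) = ([~: A, G] \subset N).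
Proof.
move=> nsNG sAG; have nNG := normal_norm nsNG.
rewrite /ZN -sub_quotient_pre ?(subset_trans sAG) //.
rewrite subsetI quotientS //= quotient_cents2 ?(subset_trans sAG) //.
Qed.

Lemma ZN_comm (N : {group gT}) : N <| G -> [~: ZN G N, G] \subset N.
Proof. by move=> nsNG; rewrite -ZN_sub ?ZN_subG. Qed.

Lemma ZN_mono (N K : {group gT}) : N <| G -> K <| G -> N \subset K ->
  ZN G N \subset ZN G K.
Proof.
move=> nsNG nsKG sNK; rewrite ZN_sub ?ZN_subG //.
exact: subset_trans (ZN_comm nsNG) sNK.
Qed.

Lemma Zchi_ZN (i : Iirr G) : 'Z(('chi_i)%R)%CF = ZN G (cfker ('chi_i)%R).
Proof.
have nsKG := cfker_normal ('chi[G]_i)%R.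
apply/eqP; rewrite eqEsubset ZN_sub ?cfcenter_sub //.
rewrite -quotient_cents2 ?(subset_trans (cfcenter_sub _)) ?normal_norm //.
rewrite cfcenter_eq_center subsetIr /=.
rewrite -(quotientSGK _ (normal_sub (cfker_center_normal _))); last first.
  by rewrite (subset_trans (ZN_subG nsKG)) ?normal_norm.
by rewrite cfcenter_eq_center /ZN cosetpreK.
Qed.


Lemma nested_ZN (N : {group gT}) : nested G -> N <| G ->
  exists j : Iirr G, ZN G N = 'Z(('chi_j)%R)%CF.
Proof.
move=> nG nsNG.
have P0 : N \subset cfker ('chi[G]_0)%R by rewrite cfker_irr0 normal_sub.
case: (@arg_minnP _ (0%R : Iirr G) (fun j : Iirr G => N \subset cfker ('chi_j)%R) (fun j : Iirr G => #|'Z(('chi_j)%R)%CF|) P0) => j Nj minj.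
exists j; apply/eqP; rewrite eqEsubset Zchi_ZN ZN_mono ?cfker_normal //=.
rewrite -Zchi_ZN ZN_sub ?cfcenter_sub // -(cap_cfker_normal nsNG).
apply/bigcapsP=> i Ni.
have sji : 'Z(('chi_j)%R)%CF \subset 'Z(('chi_i)%R)%CF.
  case: (nG i j) => // sij.
  have /eqP -> : 'Z(('chi_i)%R)%CF == 'Z(('chi_j)%R)%CF by rewrite eqEcard sij minj.
  exact: subxx.
apply: subset_trans (commSg _ sji) _.
by rewrite -ZN_sub ?cfcenter_sub ?cfker_normal // Zchi_ZN.
Qed.

Lemma chain_mono n (X : nat -> {group gT}) : normal_chain G n X ->
  forall a b, (a <= b)%N -> (b <= n)%N -> X b \subset X a.
Proof.
case=> _ Hp _ a; elim=> [|b IH]; first by rewrite leqn0 => /eqP ->.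
rewrite leq_eqVlt => /orP [/eqP -> _|]; first exact: subxx.
rewrite ltnS => ab bn.
apply: subset_trans (IH ab (ltnW bn)); exact: proper_sub (Hp _ bn).
Qed.

Lemma two_one n (X : nat -> {group gT}) : normal_chain G n X ->
  centers_in_chain G n X -> nested G.
Proof.
move=> hc hz i j; rewrite !Zchi_ZN.
have [a an ->] := hz _ (cfker_normal ('chi_i)%R).
have [b bn ->] := hz _ (cfker_normal ('chi_j)%R).
case: (leqP a b) => ab; [right|left]; apply: chain_mono hc _ _ _ _ => //.
exact: ltnW.
Qed.


Lemma ZN_GG : ZN G G = G.
Proof.
apply/eqP; rewrite eqEsubset ZN_subG ?normal_refl // ZN_sub ?normal_refl //.
by rewrite commg_subl normG.
Qed.

Lemma one_two : nested G ->
  exists n (X : nat -> {group gT}), normal_chain G n X /\ centers_in_chain G n X.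
Proof.
move=> nG.
pose s0 := [seq (cfcenter_group ('chi_i)%R) | i <- enum (Iirr G)].
pose r := fun A B : {group gT} => B \subset A.
pose s := sort r (undup s0).
have memS A : (A \in s) = (A \in s0) by rewrite mem_sort mem_undup.
have memS0 A : A \in s0 -> exists j : Iirr G, A = (cfcenter_group ('chi_j)%R).
  by case/mapP=> j _ ->; exists j.
have inS0 (j : Iirr G) : (cfcenter_group ('chi_j)%R) \in s0 by apply: map_f; rewrite mem_enum.
have us : uniq s by rewrite sort_uniq undup_uniq.
have rtr : transitive r by move=> A B C /= h1 h2; exact: subset_trans h2 h1.
have srt : sorted r s.
  apply: (@sort_sorted_in _ (mem s0)); last by apply/allP=> A; rewrite mem_undup.
  move=> A B /memS0[i ->] /memS0[j ->]; rewrite /r /=.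
  by case: (nG i j) => ->; rewrite ?orbT.
have Gs : G \in s.
  rewrite memS; have <- : (cfcenter_group ('chi[G]_0)%R) = G.
    apply: val_inj; change ('Z(('chi[G]_0)%R)%CF = G).
    have K0 : cfker ('chi[G]_0)%R = G := cfker_irr0 G.
    rewrite Zchi_ZN; apply/eqP; rewrite eqEsubset ZN_subG ?cfker_normal //.
    have h := commg_subl G G; rewrite normG in h.
    rewrite ZN_sub ?cfker_normal //.
    have -> : gval (cfker_group ('chi[G]_0)%R) = G := K0; exact: h.
  exact: (inS0 0%R).
have ss : (0 < size s)%N by case: (s) Gs.
pose X k := nth 1%G s k.
have XS k : (k < size s)%N -> exists j : Iirr G, X k = (cfcenter_group ('chi_j)%R).
  by move=> ks; apply: memS0; rewrite -memS mem_nth.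
exists (size s).-1, X; split; first split.
- have := @sorted_leq_nth _ r rtr (fun A => subxx _) 1%G s srt 0%N (index G s).
  rewrite !inE ss index_mem Gs nth_index // => /(_ isT isT isT) h.
  apply: val_inj; apply/eqP; rewrite eqEsubset andbC.
  have -> : G \subset X 0%N := h.
  by have [j ->] := XS 0%N ss; exact: cfcenter_sub.
- move=> i il; have il' : (i.+1 < size s)%N by rewrite -(prednK ss).
  rewrite properEneq.
  have -> : X i.+1 \subset X i.
    exact: (@sorted_ltn_nth _ r rtr 1%G s srt i i.+1) (ltnW il') il' (ltnSn i).
  rewrite andbT; apply/negP => /eqP h.
  have : X i.+1 = X i by apply: val_inj.
  by move/eqP; rewrite /X nth_uniq // ?(ltnW il') // => /eqP h2; have := n_Sn i; rewrite h2.
- move=> i il; have il' : (i < size s)%N by rewrite -(prednK ss).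
  by have [j ->] := XS i il'; exact: cfcenter_normal.
move=> N nsNG; have [j ->] := nested_ZN nG nsNG.
have js : (cfcenter_group ('chi_j)%R) \in s by rewrite memS.
exists (index (cfcenter_group ('chi_j)%R) s).
  by rewrite -ltnS (prednK ss) index_mem.
by rewrite /X nth_index.
Qed.

End L.

Unset Implicit Arguments. Set Strict Implicit.

Theorem theorem1p3 (gT : finGroupType) (G : {group gT}) :
  (* (1) <-> (2) *)
  (nested G <->
     exists n (X : nat -> {group gT}), normal_chain G n X /\ centers_in_chain G n X)
  /\
  (* (1) <-> (3) *)
  (nested G <->
     forall N M : {group gT}, N <| G -> M <| G ->
       (ZN G N \subset ZN G M) \/ (ZN G M \subset ZN G N))
  /\
  (* Moreover: a chain as in (2) all of whose terms are realised is the chain of centers *)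
  (forall n (X : nat -> {group gT}),
     normal_chain G n X -> centers_in_chain G n X ->
     (forall i, (i <= n)%N -> exists2 N : {group gT}, N <| G & ZN G N = X i) ->
     forall H : {set gT},
       (exists2 i, (i <= n)%N & H = X i) <-> (exists j : Iirr G, H = 'Z(('chi_j)%R)%CF)).
Proof.
split; [split; [exact: one_two | by case=> n [X [hc hz]]; exact: two_one hc hz]|].
split; first split.
- move=> nG N M nsN nsM.
  have [i ->] := nested_ZN nG nsN; have [j ->] := nested_ZN nG nsM; exact: nG.
- move=> h i j; rewrite !Zchi_ZN; apply: h; exact: cfker_normal.
move=> n X hc hz hr H; have nG := two_one hc hz; split.
- case=> i ilt ->; have [N nsN <-] := hr i ilt; exact: nested_ZN nG nsN.
case=> j ->; rewrite Zchi_ZN.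
have [i ilt ->] := hz _ (cfker_normal ('chi_j)%R); by exists i.
Qed.
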